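(* Let $p$ be a prime, let $\mathcal{F}$ be a saturated fusion system on a finite $p$-group $S$, and let $\Omega$ be a characteristic biset for $\mathcal{F}$. Consider the square matrix \[ \bigl( |P\backslash \Omega /Q| \bigr)_{P,Q}, \] whose rows and columns are indexed by the $\mathcal{F}$-conjugacy classes of subgroups of $S$ (with $P,Q$ representatives) and whose $(P,Q)$-entry is the number of $(P,Q)$-orbits of $\Omega$ (orbits of $P\times Q$ acting by $(u,v)\cdot x=uxv^{-1}$). Then the rank of this matrix (over $\mathbb{Q}$) is equal to the number of $\mathcal{F}$-conjugacy classes of cyclic subgroups of $S$.
   Context: A saturated fusion system $\mathcal{F}$ on a finite $p$-group $S$ is a category whose objects are the subgroups of $S$ and whose morphisms are injective group homomorphisms, containing conjugations by elements of $S$, closed under restriction and inverses, and satisfying the Broto–Levi–Oliver saturation axioms. $P,P'\leq S$ are $\mathcal{F}$-conjugate if some morphism of $\mathcal{F}$ is an isomorphism $P\to P'$. An $(S,S)$-biset is a finite set with commuting left and right $S$-actions; it is viewed as a left $S\times S$-set via $(s,t)\cdot x = sxt^{-1}$. A left $S$-set $X$ is $\mathcal{F}$-stable if for every $P\leq S$ and every morphism $\varphi\colon P\to S$ in $\mathcal{F}$, the $P$-sets obtained by restricting the $S$-action along the inclusion $P\hookrightarrow S$ and along $\varphi$ are isomorphic. An $(S,S)$-biset is $\mathcal{F}$-stable if, as a left $S\times S$-set, it is $(\mathcal{F}\times\mathcal{F})$-stable (i.e. stable under restriction along $\varphi$ on the left and $\psi$ on the right for $\mathcal{F}$-morphisms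 $\varphi,\psi$). It is $\mathcal{F}$-generated if every isotropy subgroup of the left $S\times S$-action is of the form $\Delta(P,\varphi)=\{(u,\varphi(u))\mid u\in P\}$ with $P\leq S$ and $\varphi\colon P\to S$ in $\mathcal{F}$. A characteristic biset for $\mathcal{F}$ is a finite $(S,S)$-biset $\Omega$ that is $\mathcal{F}$-stable, $\mathcal{F}$-generated, and such that $|\Omega|/|S|$ is not divisible by $p$. *)

(* Defs.v *)
From HB Require Import structures.
From mathcomp Require Import all_boot all_order all_algebra all_fingroup all_solvable.
Set Implicit Arguments. Unset Strict Implicit. Unset Printing Implicit Defensive.
Import GroupScope.

(* A fusion system F on S is encoded by the boolean predicate
   [homF P phi] : "phi (restricted to P) is a morphism P -> S of F".
   Hom_F(P,Q) = { phi | homF P phi /\ phi(P) <= Q }. *)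

Section Fusion.
Variable gT : finGroupType.
Variable S : {group gT}.
Variable homF : {set gT} -> {ffun gT -> gT} -> bool.

Definition fcomp (psi phi : {ffun gT -> gT}) : {ffun gT -> gT} :=
  [ffun x => psi (phi x)].

Definition fconj (s : gT) : {ffun gT -> gT} := [ffun x => x ^ s].

Definition Fconj (P Q : {set gT}) : bool :=
  [exists phi : {ffun gT -> gT}, homF P phi && (phi @: P == Q)].

Definition is_fusion_system : Prop :=
      (forall P phi, homF P phi ->
         [/\ group_set P, P \subset S, {in P &, {morph phi : x y / x * y}},
             {in P &, injective phi} & phi @: P \subset S]) /\
  [/\
      (forall P phi (psi : {ffun gT -> gT}), homF P phi -> {in P, phi =1 psi} -> homF P psi),
      (forall (P : {group gT}) s, P \subset S -> s \in S -> homF P (fconj s)),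
      (forall P Q phi (psi : {ffun gT -> gT}), homF P phi -> homF Q psi -> phi @: P \subset Q ->
         homF P (fcomp psi phi)),
      (forall (P Q : {group gT}) phi, homF P phi -> Q \subset P -> homF Q phi) &
      (forall P phi, homF P phi ->
         exists psi : {ffun gT -> gT}, homF (phi @: P) psi && [forall x in P, psi (phi x) == x])].

Definition fully_normalized (P : {set gT}) : bool :=
  [forall Q : {group gT}, Fconj P Q ==> (#|'N_S(Q)| <= #|'N_S(P)|)].

Definition fully_centralized (P : {set gT}) : bool :=
  [forall Q : {group gT}, Fconj P Q ==> (#|'C_S(Q)| <= #|'C_S(P)|)].

Definition AutF (P : {set gT}) : {set {perm gT}} :=
  [set a in Aut P | homF P [ffun x => a x]].

Definition AutS (P : {set gT}) : {set {perm gT}} :=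
  [set a in Aut P | [exists g in 'N_S(P), [forall x in P, a x == x ^ g]]].

(* N_phi = { g in N_S(P) | phi c_g phi^-1 in Aut_S(phi(P)) } *)
Definition Nphi (P : {set gT}) (phi : {ffun gT -> gT}) : {set gT} :=
  [set g in 'N_S(P) |
     [exists s in S, [forall x in P, phi (x ^ g) == (phi x) ^ s]]].

Definition saturated_fusion_system (p : nat) : Prop :=
  [/\ is_fusion_system,
      (forall P : {group gT}, P \subset S -> fully_normalized P ->
         fully_centralized P /\ p.-Sylow(AutF P) (AutS P)) &
      (forall (P : {group gT}) phi, homF P phi ->
         fully_centralized (phi @: P) ->
         exists psi : {ffun gT -> gT}, homF (Nphi P phi) psi && [forall x in P, psi x == phi x])].

(* (S,S)-bisets, encoded as actions of S x S.  MathComp actions are right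
   actions; the left S x S-action (s,t).x = s x t^-1 corresponds to the right
   action x.(s,t) = s^-1 x t, which has the same orbits, isotropy groups and
   isomorphisms of restricted sets. *)
Variable Omega : finType.
Variable to : action (setX S S) Omega.

Definition prodf (phi psi : {ffun gT -> gT}) (g : gT * gT) : gT * gT :=
  (phi g.1, psi g.2).

Definition Delta (P : {set gT}) (phi : {ffun gT -> gT}) : {set gT * gT} :=
  [set (u, phi u) | u in P].

Definition F_stable_biset : Prop :=
  forall (P Q : {group gT}) phi psi, homF P phi -> homF Q psi ->
    exists f : Omega -> Omega, bijective f /\
      forall x g, g \in setX P Q -> f (to x g) = to (f x) (prodf phi psi g).

Definition F_generated_biset : Prop :=
  forall x : Omega, exists P phi, homF P phi /\
    'C_(setX S S)[x | to] = Delta P phi.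

Definition characteristic_biset (p : nat) : Prop :=
  [/\ F_stable_biset, F_generated_biset & ~~ (p %| #|Omega| %/ #|S|)].

Definition norbits (P Q : {set gT}) : nat :=
  #|[set orbit to (setX P Q) x | x : Omega]|.

Definition Fclass_transversal (reps : seq {group gT}) : Prop :=
  [/\ all (fun P : {group gT} => P \subset S) reps,
      (forall Q : {group gT}, Q \subset S -> has (fun P : {group gT} => Fconj Q P) reps) &
      (forall i j, i < size reps -> j < size reps ->
         Fconj (nth 1%G reps i) (nth 1%G reps j) -> i = j)].

Definition orbit_matrix (reps : seq {group gT}) : 'M[rat]_(size reps) :=
  \matrix_(i, j) ((norbits (nth 1%G reps i) (nth 1%G reps j))%:R)%R.

Definition cyclic_subgroups : {set {group gT}} :=
  [set Q : {group gT} | (Q \subset S) && cyclic Q].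

Definition n_cyclic_Fclasses : nat :=
  #|[set [set R : {group gT} in cyclic_subgroups | Fconj Q R] | Q : {group gT} in cyclic_subgroups]|.

End Fusion.

(* Main.v *)
Require Import Defs.
From HB Require Import structures.
From mathcomp Require Import all_boot all_order all_algebra all_fingroup all_solvable.
From mathcomp Require Import ring.
Import GroupScope.

Module Aux.
Set Implicit Arguments. Unset Strict Implicit. Unset Printing Implicit Defensive.

Section Basics.
Variable gT : finGroupType.
Variable S : {group gT}.
Variable homF : {set gT} -> {ffun gT -> gT} -> bool.
Hypothesis HF : is_fusion_system S homF.

Lemma hom_group P phi : homF P phi -> group_set P.
Proof. by case: HF => H1 _ /H1 => -[]. Qed.
Lemma hom_sub P phi : homF P phi -> P \subset S.
Proof. by case: HF => H1 _ /H1 => -[]. Qed.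
Lemma hom_morph P phi : homF P phi -> {in P &, {morph phi : x y / x * y}}.
Proof. by case: HF => H1 _ /H1 => -[]. Qed.
Lemma hom_inj P phi : homF P phi -> {in P &, injective phi}.
Proof. by case: HF => H1 _ /H1 => -[]. Qed.
Lemma hom_im P phi : homF P phi -> phi @: P \subset S.
Proof. by case: HF => H1 _ /H1 => -[]. Qed.

Lemma hom1 P phi : homF P phi -> phi 1 = 1.
Proof.
move=> hP; have P1 : 1 \in P by have /group_setP[] := hom_group hP.
have := hom_morph hP P1 P1; rewrite mulg1 => e.
by apply: (@mulgI _ (phi 1)); rewrite -e mulg1.
Qed.

Lemma homX P phi x n : homF P phi -> x \in P -> phi (x ^+ n) = phi x ^+ n.
Proof.
move=> hP Px; have gP := hom_group hP.
pose G := Group gP.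
have Gx : x \in G by [].
elim: n => [|n IH]; first by rewrite !expg0 (hom1 hP).
rewrite !expgS (hom_morph hP) ?IH //; exact: (groupX n Gx).
Qed.

Lemma hom_cycle P phi x : homF P phi -> x \in P -> phi @: <[x]> = <[phi x]>.
Proof.
move=> hP Px; apply/setP=> y; apply/imsetP/cycleP.
  by case=> z /cycleP[i ->] ->; exists i; rewrite (homX _ hP Px).
by case=> i ->; exists (x ^+ i); [apply/cycleP; exists i | rewrite (homX _ hP Px)].
Qed.

Lemma hom_card P phi : homF P phi -> #|phi @: P| = #|P|.
Proof. by move=> hP; exact: card_in_imset (hom_inj hP). Qed.

Lemma fconj1E : fconj (1 : gT) =1 id.
Proof. by move=> x; rewrite /fconj ffunE conjg1. Qed.

Lemma hom_id (P : {group gT}) : P \subset S -> homF P (fconj 1).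
Proof. move=> sPS; case: HF => _ [] _ Hc _ _ _; exact: Hc sPS (group1 S). Qed.

Lemma Fconj_refl (P : {group gT}) : P \subset S -> Fconj homF P P.
Proof.
move=> sPS; apply/existsP; exists (fconj 1); rewrite hom_id //=.
by apply/eqP/setP=> y; apply/imsetP/idP => [[z Pz ->]|Py]; [rewrite fconj1E | exists y; rewrite ?fconj1E].
Qed.

Lemma Fconj_sym P Q : Fconj homF P Q -> Fconj homF Q P.
Proof.
case/existsP=> phi /andP[hP /eqP eQ].
case: HF => _ [] _ _ _ _ Hinv; have [psi /andP[hQ /forall_inP Hk]] := Hinv _ _ hP.
apply/existsP; exists psi; rewrite -eQ hQ /=; apply/eqP.
rewrite -imset_comp; apply/setP=> y; apply/imsetP/idP => [[z Pz ->]|Py].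
  by rewrite /= (eqP (Hk z Pz)).
by exists y => //=; rewrite (eqP (Hk y Py)).
Qed.

Lemma Fconj_trans P Q R : Fconj homF P Q -> Fconj homF Q R -> Fconj homF P R.
Proof.
case/existsP=> phi /andP[hP /eqP eQ]; case/existsP=> psi /andP[hQ /eqP eR].
case: HF => _ [] _ _ Hcomp _ _.
apply/existsP; exists (fcomp psi phi); rewrite (Hcomp _ Q) ?eQ //=.
by rewrite -eR -eQ -imset_comp; apply/eqP/eq_imset => x; rewrite /fcomp ffunE.
Qed.

Lemma Fconj_card P Q : Fconj homF P Q -> #|Q| = #|P|.
Proof. by case/existsP=> phi /andP[hP /eqP <-]; apply: hom_card. Qed.

Lemma Fconj_subS P Q : Fconj homF P Q -> (P \subset S) && (Q \subset S).
Proof. by case/existsP=> phi /andP[hP /eqP <-]; rewrite (hom_sub hP) (hom_im hP). Qed.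

Lemma Fconj_cyclic P Q : Fconj homF P Q -> cyclic P -> cyclic Q.
Proof.
case/existsP=> phi /andP[hP /eqP <-] /cyclicP[x eP].
have gP := hom_group hP; have Px : x \in P.
  by rewrite eP cycle_id.
by apply/cyclicP; exists (phi x); rewrite -(hom_cycle hP Px) -eP.
Qed.

End Basics.


Section Biset.
Variable gT : finGroupType.
Variable S : {group gT}.
Variable homF : {set gT} -> {ffun gT -> gT} -> bool.
Hypothesis HF : is_fusion_system S homF.
Variable Omega : finType.
Variable to : action (setX S S) Omega.
Hypothesis Hstab : F_stable_biset homF to.
Hypothesis Hgen : F_generated_biset homF to.

Definition fixn (u v : gT) := #|[set x | to x (u, v) == x]|.

Lemma fix_invariant (P Q : {group gT}) phi psi u v :
  homF P phi -> homF Q psi -> u \in P -> v \in Q -> fixn u v = fixn (phi u) (psi v).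
Proof.
move=> hP hQ Pu Qv; have [fb [fbij Hfb]] := Hstab hP hQ.
have uvPQ : (u, v) \in setX P Q by rewrite inE /= Pu Qv.
rewrite /fixn -(card_imset _ (bij_inj fbij)); apply: eq_card => y.
rewrite inE; apply/imsetP/idP => [[x]|].
  by rewrite inE => /eqP ex ->; have := Hfb x _ uvPQ; rewrite /prodf /= => <-; rewrite ex.
case: fbij => g fg gf; move=> ey; exists (g y); last by rewrite gf.
rewrite inE; apply/eqP; apply: (can_inj fg).
by have := Hfb (g y) _ uvPQ; rewrite /prodf /= => ->; rewrite gf (eqP ey).
Qed.

Lemma stab_Delta x u v : u \in S -> v \in S -> to x (u, v) = x ->
  exists P phi, [/\ homF P phi, u \in P & v = phi u].
Proof.
move=> Su Sv e; have [P [phi [hP eC]]] := Hgen x.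
have : (u, v) \in 'C_(setX S S)[x | to].
  by rewrite !inE /= Su Sv /=; apply/subsetP => y; rewrite !inE => /eqP ->; rewrite e.
rewrite eC => /imsetP[w Pw [-> ->]].
by exists P, phi.
Qed.

Lemma fix_conj u v : u \in S -> v \in S -> 0 < fixn u v -> Fconj homF <[u]> <[v]>.
Proof.
move=> Su Sv /card_gt0P[x]; rewrite inE => /eqP e.
have [P [phi [hP Pu ->]]] := stab_Delta Su Sv e.
have gP := hom_group HF hP; pose G := Group gP.
case: HF => _ [] _ _ _ Hres _.
have hu : homF <[u]> phi by apply: (Hres G); rewrite // cycle_subG.
by apply/existsP; exists phi; rewrite hu (hom_cycle HF hP Pu) eqxx.
Qed.

End Biset.


Section Exist.
Variable gT : finGroupType.
Variable S : {group gT}.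
Variable homF : {set gT} -> {ffun gT -> gT} -> bool.
Hypothesis HF : is_fusion_system S homF.
Variable Omega : finType.
Variable to : action (setX S S) Omega.
Hypothesis Hstab : F_stable_biset homF to.
Hypothesis Hgen : F_generated_biset homF to.
Variable p : nat.
Hypothesis pS : p.-group S.
Hypothesis Hnd : ~~ (p %| #|Omega| %/ #|S|).

Let SS := setX_group S S.
Let tog : action SS Omega := to.
Let K := setX_group [1 gT]%G S.

Lemma sKSS : K \subset SS.
Proof. by apply/subsetP=> -[a b]; rewrite !inE /= => /andP[/eqP -> ->]; rewrite group1. Qed.

Lemma stabK x : #|'C_K[x | tog]| = 1%N.
Proof.
have [P [phi [hP eC]]] := Hgen x.
have sub : 'C_K[x | tog] \subset [1].
  apply/subsetP=> -[a b] /setIP[]; rewrite !inE /= => /andP[/eqP -> Sb] st.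
  have : (1, b) \in Delta P phi.
    by rewrite -eC !inE /= group1 Sb /=; move: st; case/andP.
  by move=> /imsetP[w Pw [<- ->]]; rewrite (hom1 HF hP).
have -> : 'C_K[x | tog] = [1].
  by apply/eqP; rewrite eqEsubset sub sub1set group1.
exact: cards1.
Qed.

Lemma card_orbK x : #|orbit tog K x| = #|S|.
Proof.
have := card_orbit_in_stab tog x sKSS; rewrite stabK muln1 => ->.
by rewrite cardsX cards1 mul1n.
Qed.


Lemma pairM (a b c d : gT) : (a, b) * (c, d) = (a * c, b * d).
Proof. by []. Qed.
Lemma pairV (a b : gT) : (a, b)^-1 = (a^-1, b^-1).
Proof. by []. Qed.

Let Orbs := orbit tog K @: setT.

Lemma actsK : [acts K, on setT | tog].
Proof.
apply/subsetP=> k Kk; rewrite !inE.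
have := subsetP sKSS k Kk; rewrite !inE => -> /=.
by apply/subsetP=> y; rewrite !inE.
Qed.

Lemma card_Orbs : #|Omega| = (#|Orbs| * #|S|)%N.
Proof.
rewrite -cardsT -(acts_sum_card_orbit actsK) -sum_nat_const.
by apply: eq_bigr => T /imsetP[x _ ->]; rewrite card_orbK.
Qed.

Lemma comm_act x u t : u \in S -> t \in S ->
  tog (tog x (1, t)) (u, 1) = tog (tog x (u, 1)) (1, t).
Proof.
move=> Su St.
have D1 : ((1 : gT), t) \in SS by rewrite !inE /= group1 St.
have D2 : (u, (1 : gT)) \in SS by rewrite !inE /= group1 Su.
rewrite -!actMin //; congr (tog x _).
by rewrite !pairM !mul1g !mulg1.
Qed.

Lemma setact_orbK x u : u \in S ->
  tog^* (orbit tog K x) (u, 1) = orbit tog K (tog x (u, 1)).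
Proof.
move=> Su; apply/setP=> y; apply/imsetP/orbitP.
  case=> z /orbitP[[a t]]; rewrite !inE /= => /andP[/eqP -> St] <- ->.
  by exists (1, t); [rewrite !inE /= eqxx | rewrite comm_act].
case=> -[a t]; rewrite !inE /= => /andP[/eqP -> St] <-.
exists (tog x (1, t)); first by apply/orbitP; exists (1, t); rewrite // !inE /= eqxx St.
by rewrite comm_act.
Qed.

Lemma fix_exists u : u \in S -> exists v, v \in S /\ (0 < fixn to u v)%N.
Proof.
move=> Su.
pose H := setX_group <[u]>%G [1 gT]%G.
have sHSS : H \subset SS.
  apply/subsetP=> -[a b]; rewrite !inE /= => /andP[Ha /eqP ->]; rewrite group1 andbT.
  by apply: subsetP Ha; rewrite cycle_subG.
have pH : p.-group H.
  rewrite /pgroup cardsX cards1 muln1.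
  by apply: pgroupS pS; rewrite cycle_subG.
have actsH : [acts H, on Orbs | tog^*].
  apply/subsetP=> h Hh; rewrite !inE.
  have := subsetP sHSS h Hh; rewrite !inE => -> /=.
  apply/subsetP=> T /imsetP[x _ ->]; rewrite !inE.
  move: Hh; case: h => a b; rewrite !inE /= => /andP[/cycleP[i ->] /eqP ->].
  have Sui : u ^+ i \in S by rewrite groupX.
  by rewrite setact_orbK //; apply/imsetP; exists (tog x (u ^+ i, 1)); rewrite ?inE.
have := pgroup_fix_mod pH actsH.
case: (set_0Vmem 'Fix_(Orbs | tog^*)(H)) => [-> | [T]].
  rewrite cards0 => e.
  have dv : p %| #|Orbs| by rewrite /dvdn e mod0n.
  by move: Hnd; rewrite card_Orbs mulnK ?dv // cardG_gt0.
case/setIP=> /imsetP[x _ ->] /afixP fT _.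
have uH : (u, (1 : gT)) \in H by rewrite !inE /= cycle_id eqxx.
have := fT _ uH => /=; rewrite setact_orbK // => eO.
have : tog x (u, 1) \in orbit tog K x by rewrite -eO orbit_refl.
case/orbitP=> -[a t]; rewrite !inE /= => /andP[/eqP -> St] ex.
have D1 : ((1 : gT), t) \in SS by rewrite !inE /= group1 St.
have D1' : ((1 : gT), t)^-1 \in SS by rewrite groupV.
have D2 : (u, (1 : gT)) \in SS by rewrite !inE /= group1 Su.
exists t^-1; split; first by rewrite groupV.
apply/card_gt0P; exists x; rewrite inE.
have -> : (u, t^-1) = (u, (1 : gT)) * ((1 : gT), t)^-1.
  by rewrite pairV pairM invg1 mulg1 mul1g.
by rewrite actMin // -ex actKin.
Qed.

End Exist.


Section Sums.
Variable gT : finGroupType.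
Variable S : {group gT}.
Variable homF : {set gT} -> {ffun gT -> gT} -> bool.
Hypothesis HF : is_fusion_system S homF.
Variable Omega : finType.
Variable to : action (setX S S) Omega.
Hypothesis Hstab : F_stable_biset homF to.

Let SS := setX_group S S.
Let tog : action SS Omega := to.

Lemma burnside (P Q : {group gT}) : P \subset S -> Q \subset S ->
  (norbits to P Q * (#|P| * #|Q|))%N = \sum_(u in P) \sum_(v in Q) fixn to u v.
Proof.
move=> sPS sQS; pose G := setX_group P Q.
have sGSS : G \subset SS.
  by apply/subsetP=> -[a b]; rewrite !inE /= => /andP[Pa Qb]; rewrite (subsetP sPS) ?(subsetP sQS).
have actsG : [acts G, on setT | tog].
  apply/subsetP=> k Kk; rewrite !inE.
  have := subsetP sGSS k Kk; rewrite !inE => -> /=.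
  by apply/subsetP=> y; rewrite !inE.
have := Frobenius_Cauchy actsG.
have -> : norbits to P Q = #|orbit tog G @: setT|.
  rewrite /norbits; apply: eq_card => T; apply/imsetP/imsetP => -[x _ ->]; by exists x.
rewrite cardsX => <-.
rewrite pair_big_dep /=; apply: eq_big => [[u v]|[u v] _]; first by rewrite !inE.
apply: eq_card => y; rewrite !inE sub1set !inE.
by [].
Qed.

Lemma partition_cyc (Q : {group gT}) (F : gT -> nat) : Q \subset S ->
  \sum_(v in Q) F v =
  \sum_(D in cyclic_subgroups S | D \subset Q) \sum_(v | <[v]>%G == D) F v.
Proof.
move=> sQS.
rewrite (partition_big (fun v => <[v]>%G) (fun D => (D \in cyclic_subgroups S) && (D \subset Q))) /=.
  apply: eq_bigr => D /andP[_ sDQ]; apply: eq_bigl => v.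
  apply/andP/idP => [[_ ->]//|/eqP eD]; split; last by rewrite eD.
  by apply: (subsetP sDQ); rewrite -eD cycle_id.
move=> v Qv; rewrite !inE cycle_cyclic cycle_subG andbT (subsetP sQS) //=.
by rewrite cycle_subG.
Qed.

Definition Gn (P : {set gT}) (D : {group gT}) :=
  \sum_(v | <[v]>%G == D) \sum_(u in P) fixn to u v.

Lemma Gn_invariant (P D D' : {group gT}) : P \subset S ->
  Fconj homF D D' -> Gn P D = Gn P D'.
Proof.
move=> sPS /existsP[phi /andP[hD /eqP eD']].
have gD := hom_group HF hD.
pose A := [set v | <[v]>%G == D].
have sAD : A \subset D by apply/subsetP=> v; rewrite inE => /eqP <-; rewrite cycle_id.
have eA : phi @: A = [set v | <[v]>%G == D'].
  apply/setP=> y; rewrite inE; apply/imsetP/idP.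
    case=> v; rewrite inE => /eqP eDv ->.
    have Dv : v \in D by rewrite -eDv cycle_id.
    have eDv' : <[v]> = D := congr1 val eDv.
    by apply/eqP/val_inj => /=; rewrite -(hom_cycle HF hD Dv) eDv'.
  move/eqP=> eDy; have : y \in D' by rewrite -eDy cycle_id.
  rewrite -eD' => /imsetP[w Dw ey]; exists w => //; rewrite inE.
  have swD : <[w]> \subset D by rewrite cycle_subG.
  have ci : #|phi @: <[w]>| = #|<[w]>|.
    by apply: card_in_imset; apply: sub_in2 (hom_inj HF hD) => z; apply: (subsetP swD).
  apply/eqP/val_inj => /=; apply/eqP; rewrite eqEcard swD -ci (hom_cycle HF hD Dw) -ey.
  have eDy' : <[y]> = D' := congr1 val eDy.
  by rewrite eDy' -eD' (hom_card HF hD) /= leqnn.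
rewrite /Gn.
transitivity (\sum_(v in A) \sum_(u in P) fixn to u (phi v)).
  apply: eq_big => [v|v]; first by rewrite /A inE.
  move=> /eqP eDv; have Dv : v \in D by rewrite -eDv cycle_id.
  apply: eq_bigr => u Pu.
  rewrite (fix_invariant Hstab (hom_id HF sPS) hD Pu Dv).
  by rewrite fconj1E.
rewrite -(big_imset (fun y => \sum_(u in P) fixn to u y)) /=; last by apply: sub_in2 (hom_inj HF hD) => z; apply: (subsetP sAD).
by apply: eq_bigl => v; rewrite eA inE.
Qed.

End Sums.

Section TriRank.
Import GRing.Theory.
Local Open Scope ring_scope.

Lemma tri_rank n (A : 'M[rat]_n) (w : 'I_n -> nat) :
  (forall a b, A a b != 0 -> a = b \/ (w a < w b)%N) -> (forall a, A a a != 0) ->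
  \rank A = n.
Proof.
move=> Htri Hdiag.
have K0 : kermx A = 0.
  apply/row_matrixP => r; rewrite row0.
  set z := row r (kermx A).
  have zA : z *m A = 0 by rewrite -row_mul mulmx_ker row0.
  suff H : forall N a, (w a < N)%N -> z 0 a = 0.
    by apply/rowP => a; rewrite [RHS]mxE; apply: (H (w a).+1).
  elim=> [//|N IH] a lta.
  have e := congr1 (fun M : 'rV[rat]_n => M 0 a) zA.
  rewrite /= [LHS]mxE [RHS]mxE (bigD1 a) //= big1 ?addr0 in e.
    by move/eqP: e; rewrite mulf_eq0 (negPf (Hdiag a)) orbF => /eqP.
  move=> b nba; have [Ab0|nAb0] := eqVneq (A b a) 0; first by rewrite Ab0 mulr0.
  case: (Htri _ _ nAb0) => [eba|ltba]; first by rewrite eba eqxx in nba.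
  by rewrite IH ?mul0r // (leq_trans ltba).
apply/eqP; rewrite eqn_leq rank_leq_row /=.
have := mxrank_ker A; rewrite K0 mxrank0 => /esym/eqP; rewrite subn_eq0 => //.
Qed.

End TriRank.


Section Main.
Variable gT : finGroupType.
Variable S : {group gT}.
Variable homF : {set gT} -> {ffun gT -> gT} -> bool.
Hypothesis HF : is_fusion_system S homF.
Variable Omega : finType.
Variable to : action (setX S S) Omega.
Hypothesis Hstab : F_stable_biset homF to.
Hypothesis Hgen : F_generated_biset homF to.
Variable p : nat.
Hypothesis pS : p.-group S.
Hypothesis Hnd : ~~ (p %| #|Omega| %/ #|S|).
Variable reps : seq {group gT}.
Hypothesis Htr : Fclass_transversal S homF reps.

Let k := size reps.
Let Pi (i : nat) : {group gT} := nth 1%G reps i.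

Lemma sPiS i : i < k -> Pi i \subset S.
Proof. by case: Htr => /(all_nthP 1%G) H _ _; apply: H. Qed.

Let cyc := cyclic_subgroups S.
Definition cls (Q : {group gT}) : {set {group gT}} :=
  [set R : {group gT} in cyc | Fconj homF Q R].
Let Cls := [set cls Q | Q : {group gT} in cyc].

Lemma nCE : n_cyclic_Fclasses S homF = #|Cls|.
Proof. by []. Qed.

Lemma cycE (R : {group gT}) : (R \in cyc) = (R \subset S) && cyclic R.
Proof. by rewrite inE. Qed.

Lemma cls_mem c R : c \in Cls -> R \in cyc -> (R \in c) = (cls R == c).
Proof.
case/imsetP=> Q cQ -> cR; apply/idP/eqP => [|<-].
  rewrite inE => /andP[_ fQR]; apply/setP=> T; rewrite !inE.
  apply/andP/andP => -[cT f]; split => //.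
    move: f; apply: (Fconj_trans HF fQR).
  move: f; apply: (Fconj_trans HF (Fconj_sym HF fQR)).
rewrite inE cR /=; apply: (@Fconj_refl gT S homF HF R).
by move: cR; rewrite cycE => /andP[].
Qed.

Let nC := #|Cls|.
Let cl (c : 'I_nC) : {set {group gT}} := enum_val c.
Lemma cl_in c : cl c \in Cls.
Proof. exact: enum_valP. Qed.

Lemma cl_sub c R : R \in cl c -> R \in cyc.
Proof. by have /imsetP[Q _ ->] := cl_in c; rewrite inE => /andP[]. Qed.

Lemma exrep c : exists j : 'I_k, Pi j \in cl c.
Proof.
have /imsetP[Q cQ eC] := cl_in c.
case: Htr => _ /(_ Q) Hhas _.
have sQS : Q \subset S by move: cQ; rewrite cycE => /andP[].
case/hasP: (Hhas sQS) => P inP fQP.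
case/(nthP 1%G): inP => j ltj ejP.
exists (Ordinal ltj); rewrite eC inE /Pi /= ejP fQP andbT cycE.
have /andP[_ ->] := Fconj_subS HF fQP.
by rewrite (Fconj_cyclic HF fQP) //; move: cQ; rewrite cycE => /andP[].
Qed.

Definition jo (c : 'I_nC) : 'I_k := xchoose (exrep c).
Lemma jo_in c : Pi (jo c) \in cl c.
Proof. exact: (xchooseP (exrep c)). Qed.

Lemma cl_cls c : cl c = cls (Pi (jo c)).
Proof.
by apply/esym/eqP; rewrite -cls_mem ?cl_in ?jo_in // (cl_sub (jo_in c)).
Qed.

Lemma jo_eq c c' : Pi (jo c) \in cl c' -> c = c'.
Proof.
move=> H; apply: enum_val_inj; rewrite -/(cl c) -/(cl c').
by rewrite cl_cls; apply/eqP; rewrite -cls_mem ?cl_in // (cl_sub H).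
Qed.

Lemma mem_cl_conj c R : R \in cl c -> Fconj homF (Pi (jo c)) R.
Proof. by rewrite cl_cls inE => /andP[]. Qed.

Lemma mem_cl_card c R : R \in cl c -> #|R| = #|Pi (jo c)|.
Proof. move=> H; exact: (@Fconj_card gT S homF HF _ _ (mem_cl_conj H)). Qed.

Definition cnt (c : 'I_nC) (Q : {set gT}) :=
  #|[set D in cyc | (D \in cl c) && (D \subset Q)]|.

Lemma sum_classes (P Q : {group gT}) : P \subset S ->
  \sum_(D in cyc | D \subset Q) Gn to P D =
  \sum_(c < nC) cnt c Q * Gn to P (Pi (jo c)).
Proof.
move=> sPS.
rewrite (partition_big cls (mem Cls)) /=; last first.
  by move=> D /andP[cD _]; apply: imset_f.
rewrite (big_enum_val (fun C => \sum_(D | (D \in cyc) && (D \subset Q) && (cls D == C)) Gn to P D)) /=.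
apply: eq_bigr => c _; rewrite -/(cl c) -sum_nat_const.
apply: eq_big => [D|D].
  rewrite [in RHS]inE; case cD: (D \in cyc) => //=.
  by rewrite -cls_mem ?cl_in // andbC.
case/andP=> /andP[cD _] /eqP eD.
have inD : D \in cl c by rewrite cls_mem ?cl_in // eD.
apply/esym; apply: (Gn_invariant HF Hstab) => //; exact: mem_cl_conj inD.
Qed.


Lemma count_eq (i j : 'I_k) :
  (norbits to (Pi i) (Pi j) * (#|Pi i| * #|Pi j|))%N =
  \sum_(c < nC) cnt c (Pi j) * Gn to (Pi i) (Pi (jo c)).
Proof.
have sI := sPiS (ltn_ord i); have sJ := sPiS (ltn_ord j).
rewrite (burnside to) // exchange_big /=.
rewrite (@partition_cyc gT S (Pi j) (fun v => \sum_(u in Pi i) fixn to u v)) //.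
exact: sum_classes.
Qed.

Local Open Scope ring_scope.
Import GRing.Theory Num.Theory.

Definition Xm : 'M[rat]_(k, nC) :=
  \matrix_(i, c) ((Gn to (Pi i) (Pi (jo c)))%:R / (#|Pi i|)%:R).
Definition Ym : 'M[rat]_(nC, k) :=
  \matrix_(c, j) ((cnt c (Pi j))%:R / (#|Pi j|)%:R).

Lemma factor : orbit_matrix to reps = Xm *m Ym.
Proof.
apply/matrixP => i j; rewrite !mxE.
have ha : (#|Pi i|)%:R != 0 :> rat by rewrite pnatr_eq0 -lt0n cardG_gt0.
have hb : (#|Pi j|)%:R != 0 :> rat by rewrite pnatr_eq0 -lt0n cardG_gt0.
have hab : ((#|Pi i| * #|Pi j|)%N)%:R != 0 :> rat by rewrite natrM mulf_neq0.
rewrite -[LHS](mulfK hab) -natrM count_eq natr_sum mulr_suml.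
apply: eq_bigr => c _; rewrite !mxE natrM.
field; by rewrite ha hb.
Qed.

Definition Csel : 'M[rat]_(k, nC) := \matrix_(j, c) (j == jo c)%:R.
Definition Rsel : 'M[rat]_(nC, k) := \matrix_(c, i) (i == jo c)%:R.

Lemma colsel m (B : 'M[rat]_(m, k)) a c : (B *m Csel) a c = B a (jo c).
Proof.
rewrite mxE (bigD1 (jo c)) //= mxE eqxx mulr1 big1 ?addr0 // => j nj.
by rewrite mxE (negPf nj) mulr0.
Qed.

Lemma rowsel m (B : 'M[rat]_(k, m)) c a : (Rsel *m B) c a = B (jo c) a.
Proof.
rewrite mxE (bigD1 (jo c)) //= mxE eqxx mul1r big1 ?addr0 // => j nj.
by rewrite mxE (negPf nj) mul0r.
Qed.

Lemma natr_neq0 (n : nat) : (0 < n)%N -> n%:R != 0 :> rat.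
Proof. by rewrite pnatr_eq0 -lt0n. Qed.

Lemma rankY : \rank Ym = nC.
Proof.
apply/eqP; rewrite eqn_leq rank_leq_row /=.
rewrite -{1}(@tri_rank _ (Ym *m Csel) (fun c => #|Pi (jo c)|)) ?mxrankM_maxl //.
  move=> a b; rewrite colsel mxE => nz.
  have : (0 < cnt a (Pi (jo b)))%N.
    by rewrite lt0n; apply: contraNneq nz => ->; rewrite mul0r.
  case/card_gt0P=> D; rewrite !inE => /andP[cD /andP[Da sDb]].
  have eD := mem_cl_card Da.
  have le : (#|D| <= #|Pi (jo b)|)%N by apply: subset_leq_card.
  rewrite leq_eqVlt in le; case/orP: le => [/eqP eq | lt]; last by right; rewrite -eD.
  left; apply/esym/jo_eq.
  have -> : Pi (jo b) = D.
    apply/val_inj/eqP => /=; rewrite eq_sym eqEcard sDb eq leqnn //.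
  exact: Da.
move=> a; rewrite colsel mxE mulf_neq0 // ?invr_eq0 natr_neq0 ?cardG_gt0 //.
apply/card_gt0P; exists (Pi (jo a)); rewrite !inE (jo_in a) subxx andbT.
by rewrite andbT; have := cl_sub (jo_in a); rewrite inE.
Qed.

Lemma exists_term (T : finType) (P : pred T) (F : T -> nat) :
  (\sum_(x | P x) F x != 0)%N -> exists x, P x /\ (0 < F x)%N.
Proof.
move=> nz; case: (pickP [pred x | P x && (F x != 0)%N]) => [x /andP[Px nx] | none].
  by exists x; rewrite lt0n.
by move: nz; rewrite big1 // => x Px; have := none x; rewrite /= Px /= => /negbFE/eqP.
Qed.

Lemma rankX : \rank Xm = nC.
Proof.
apply/eqP; rewrite eqn_leq rank_leq_col /=.
rewrite -{1}(@tri_rank _ (Rsel *m Xm)^T (fun c => #|Pi (jo c)|)) ?mxrank_tr ?mxrankM_maxr //.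
  move=> a b; rewrite mxE rowsel mxE => nz.
  have : (Gn to (Pi (jo b)) (Pi (jo a)) != 0)%N.
    by apply: contraNneq nz => ->; rewrite mul0r.
  rewrite /Gn => /exists_term[v [/eqP ev]] /lt0n_neq0 /exists_term[u [Pu pos]].
  have ev' : <[v]> = Pi (jo a) := congr1 val ev.
  have sA := sPiS (ltn_ord (jo a)); have sB := sPiS (ltn_ord (jo b)).
  have Sv : v \in S by apply: (subsetP sA); rewrite -ev' cycle_id.
  have Su : u \in S by apply: (subsetP sB).
  have fc := fix_conj HF Hgen Su Sv pos.
  have ec := @Fconj_card gT S homF HF _ _ fc.
  have le : (#|<[u]>| <= #|Pi (jo b)|)%N by apply: subset_leq_card; rewrite cycle_subG.
  rewrite -ec ev' leq_eqVlt in le; case/orP: le => [/eqP eq | lt]; last by right.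
  have eu : <[u]> = Pi (jo b).
    apply/eqP; rewrite eqEcard cycle_subG Pu /= -ec ev' eq leqnn //.
  left; apply: jo_eq; rewrite cl_cls inE.
  have := cl_sub (jo_in a); rewrite inE => -> /=.
  by rewrite -eu -ev'.
move=> a; rewrite mxE rowsel mxE mulf_neq0 // ?invr_eq0 natr_neq0 ?cardG_gt0 //.
have := cl_sub (jo_in a); rewrite inE => /andP[sA /cyclicP[u eu]].
have Su : u \in S by apply: (subsetP sA); rewrite eu cycle_id.
have [v [Sv pos]] := fix_exists HF Hgen pS Hnd Su.
have fc := fix_conj HF Hgen Su Sv pos.
have fc' : Fconj homF (Pi (jo a)) <[v]>%G by rewrite /= eu.
rewrite (Gn_invariant HF Hstab sA fc').
apply: (leq_trans pos); rewrite /Gn (bigD1 v) //= (bigD1 u) /= ?eu ?cycle_id //.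
by rewrite -addnA leq_addr.
Qed.

Lemma main_rank : \rank (orbit_matrix to reps) = n_cyclic_Fclasses S homF.
Proof. by rewrite factor mxrankMfree ?rankX // /row_free rankY. Qed.

End Main.

End Aux.
Unset Implicit Arguments.

Theorem theorem1p3 (gT : finGroupType) (p : nat) (S : {group gT})
    (homF : {set gT} -> {ffun gT -> gT} -> bool)
    (Omega : finType) (to : action (setX S S) Omega)
    (reps : seq {group gT}) :
  prime p -> p.-group S ->
  saturated_fusion_system S homF p ->
  characteristic_biset homF to p ->
  Fclass_transversal S homF reps ->
  \rank (orbit_matrix to reps) = n_cyclic_Fclasses S homF.
Proof.
move=> _ pS [HF _ _] [Hstab Hgen Hnd] Htr.
exact: (Aux.main_rank HF Hstab Hgen pS Hnd Htr).
Qed.
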